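(* Let $\Lambda$ be a finite set of sites with a real symmetric hopping matrix $(t_{x,y})$. If the whole lattice $\Lambda$ is connected by exchange bonds (i.e. the graph on $\Lambda$ whose edges are the exchange bonds is connected), then the Hubbard model with $U=\infty$ and $N_e=|\Lambda|-1$ satisfies the connectivity condition.
   Context: A loop of length $m$ is an ordered set $(x_1,\ldots,x_m)$ of distinct sites with $t_{x_i,x_{i+1}}\ne0$ for $i=1,\ldots,m-1$ and $t_{x_m,x_1}\ne0$. A pair $\{x,y\}$ of distinct sites is an exchange bond if $x$ and $y$ both belong to a common loop of length three or four, and the set $\Lambda\setminus\{x,y\}$ remains connected via nonvanishing $t_{u,v}$ (i.e. the graph on $\Lambda\setminus\{x,y\}$ with edges $\{u,v\}$, $t_{u,v}\ne0$, is connected). Connectivity condition: with $N_e=|\Lambda|-1$, a configuration is a pair $(x,\boldsymbol\sigma)$ with $x\in\Lambda$ (the empty site, ''hole'') and $\boldsymbol\sigma\in\{\uparrow,\downarrow\}^{\Lambda\setminus\{x\}}$ (each other site singly occupied with spin $\sigma_y$). Two configurations are adjacent if one is obtained from the other by moving the electron at a site $z\ne x$ with $t_{x,z}\ne0$ onto the hole $x$ (keeping its spin), $z$ becoming the new hole. The connectivity condition holds if for each fixed value of $\sum_{y\ne x}\sigma_y$ (with $\uparrow=+\frac12,\downarrow=-\frac12$) the graph of configurations with that value and this adjacency is connected. *)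

(* Defs.v *)
From HB Require Import structures.
From mathcomp Require Import all_boot all_order all_algebra.
From mathcomp Require Import reals.
From Stdlib Require Import Relations.
Set Implicit Arguments. Unset Strict Implicit. Unset Printing Implicit Defensive.
Import Order.TTheory GRing.Theory Num.Theory.
Local Open Scope ring_scope.

Section Hubbard.
Variables (R : realType) (T : finType) (t : T -> T -> R).

Definition hop (u v : T) : bool := t u v != 0.

Definition is_loop (s : seq T) : bool := uniq s && cycle hop s.

Definition hop_connected_on (S : {set T}) : Prop :=
  forall u v, u \in S -> v \in S ->
    connect (fun a b => [&& a \in S, b \in S & hop a b]) u v.

Definition common_short_loop (x y : T) : bool :=
  [exists s : 3.-tuple T, [&& is_loop s, x \in s & y \in s]] ||
  [exists s : 4.-tuple T, [&& is_loop s, x \in s & y \in s]].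

Definition exchange_bond (x y : T) : Prop :=
  [/\ x != y, common_short_loop x y & hop_connected_on (~: [set x; y])].

Definition lattice_connected_by_exchange_bonds : Prop :=
  forall u v : T, clos_refl_trans T exchange_bond u v.

(* configurations with N_e = |Lambda| - 1: each site is empty (None) or singly
   occupied with spin Some true (up) / Some false (down); exactly one hole. *)
Definition config := {ffun T -> option bool}.

Definition valid_config (c : config) : bool := #|[set y | c y == None]| == 1.

Definition spin_val (o : option bool) : rat :=
  match o with Some true => 1/2 | Some false => -(1/2) | None => 0 end.

Definition total_spin (c : config) : rat :=
  \sum_(y | c y != None) spin_val (c y).

Definition hop_move (c c' : config) : bool :=
  [exists x, exists z, [&& c x == None, z != x, hop x z &
     c' == [ffun y => if y == x then c z else if y == z then None else c y]]].

Definition config_adj (c c' : config) : bool := hop_move c c' || hop_move c' c.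

Definition connectivity_condition : Prop :=
  forall (S : rat) (c c' : config),
    valid_config c -> valid_config c' -> total_spin c = S -> total_spin c' = S ->
    connect (fun a b => [&& valid_config a, valid_config b, total_spin a == S,
                            total_spin b == S & config_adj a b]) c c'.

End Hubbard.

(* Main.v *)
Require Import Defs.
From HB Require Import structures.
From mathcomp Require Import all_boot all_order all_algebra.
From mathcomp Require Import reals.
From Stdlib Require Import Relations.
From mathcomp Require Import lra.
Set Implicit Arguments. Unset Strict Implicit. Unset Printing Implicit Defensive.
Import Order.TTheory GRing.Theory Num.Theory.
Local Open Scope ring_scope.

Section Proof6.
Variables (R : realType) (T : finType) (t : T -> T -> R).
Hypothesis t_sym : forall x y, t x y = t y x.

Lemma hopC u v : hop t u v = hop t v u.
Proof. by rewrite /hop t_sym. Qed.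

Definition sw (x y z : T) : T := if z == x then y else if z == y then x else z.

Lemma swK x y : involutive (sw x y).
Proof.
move=> z; rewrite /sw.
case: (eqVneq z x) => [->|nx]; first by rewrite eqxx; case: eqVneq => // ->.
case: (eqVneq z y) => [->|ny]; first by rewrite eqxx.
by rewrite (negbTE nx) (negbTE ny).
Qed.

Lemma sw_inj x y : injective (sw x y).
Proof. exact: inv_inj (swK x y). Qed.

Definition cp (c : config T) (f : T -> T) : config T := [ffun z => c (f z)].

Definition mv (c : config T) x z : config T :=
  [ffun y => if y == x then c z else if y == z then None else c y].

Lemma valid_cp c x y : valid_config (cp c (sw x y)) = valid_config c.
Proof.
rewrite /valid_config; congr (_ == _).
rewrite -(card_preimset [set z | c z == None] (@sw_inj x y)).
by apply: eq_card => z; rewrite !inE ffunE.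
Qed.

Lemma spin_sum (c : config T) : total_spin c = \sum_y spin_val (c y).
Proof.
rewrite /total_spin big_mkcond /=; apply: eq_bigr => y _.
by case: (c y).
Qed.

Lemma spin_cp c x y : total_spin (cp c (sw x y)) = total_spin c.
Proof.
rewrite !spin_sum [RHS](reindex_inj (@sw_inj x y)) /=.
by apply: eq_bigr => z _; rewrite ffunE.
Qed.

Lemma mv_cp (c : config T) (x z : T) : c x = None -> mv c x z = cp c (sw x z).
Proof.
move=> cx; apply/ffunP => y; rewrite !ffunE /sw.
case: (eqVneq y x) => // _; case: (eqVneq y z) => //.
Qed.

Variable S : rat.

Definition Rel (a b : config T) := [&& valid_config a, valid_config b, total_spin a == S,
                            total_spin b == S & config_adj t a b].
Definition reach := connect Rel.
Definition good (c : config T) := valid_config c && (total_spin c == S).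

Lemma Rel_sym : ssrbool.symmetric Rel.
Proof.
move=> a b; rewrite /Rel /config_adj orbC.
by apply/idP/idP => /and5P[-> -> -> -> ->].
Qed.

Lemma reach_sym a b : reach a b = reach b a.
Proof. exact: (sym_connect_sym Rel_sym). Qed.

Lemma reach_trans a b c : reach a b -> reach b c -> reach a c.
Proof. exact: connect_trans. Qed.

Lemma good_cp (c : config T) (x y : T) : good (cp c (sw x y)) = good c.
Proof. by rewrite /good valid_cp spin_cp. Qed.

Lemma mv_good (c : config T) (x z : T) : c x = None -> good (mv c x z) = good c.
Proof. by move=> cx; rewrite mv_cp // good_cp. Qed.

Lemma step (c : config T) (x z : T) : good c -> c x = None -> z != x -> hop t x z -> reach c (mv c x z).
Proof.
move=> gc cx zx hxz; apply: connect1.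
have gm : good (mv c x z) by rewrite mv_good.
move: gc gm; rewrite /good /Rel => /andP[-> ->] /andP[-> ->] /=.
rewrite /config_adj; apply/orP; left; apply/existsP; exists x; apply/existsP; exists z.
by rewrite cx eqxx zx hxz /=; apply/eqP.
Qed.

Lemma mv_hole (c : config T) x z : z != x -> mv c x z z = None.
Proof. by move=> zx; rewrite ffunE (negbTE zx) eqxx. Qed.

Ltac ffsolve :=
  apply/ffunP => ?; rewrite !ffunE /sw;
  repeat (case: ifP => [/eqP ?|?]; subst);
  try done;
  try (match goal with H : is_true (?x != ?x) |- _ => by rewrite eqxx in H end);
  try (match goal with H : (?x == ?x) = false |- _ => by rewrite eqxx in H end).

Definition tri (w a b : T) := [&& w != a, w != b, a != b, hop t w a, hop t a b & hop t b w].

Lemma step_good (c : config T) (x z : T) : good c -> c x = None -> z != x ->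
  good (mv c x z) /\ mv c x z z = None.
Proof. by move=> gc cx zx; rewrite mv_good // mv_hole. Qed.

Lemma tri_swap (d : config T) w a b : tri w a b -> good d -> d w = None ->
  reach (d) (cp d (sw a b)).
Proof.
case/and5P=> nwa nwb nab hwa /andP[hab hbw] gd dw.
have naw : a != w by rewrite eq_sym.
have nba : b != a by rewrite eq_sym.
have r1 := step gd dw naw hwa.
have [g1 h1] := step_good gd dw naw.
have r2 := step g1 h1 nba hab.
have [g2 h2] := step_good g1 h1 nba.
have r3 := step g2 h2 nwb hbw.
have -> : cp d (sw a b) = mv (mv (mv d w a) a b) b w.
  by ffsolve.
exact: reach_trans (reach_trans r1 r2) r3.
Qed.

Lemma hole_uniq (c : config T) h y : valid_config c -> c h = None -> c y = None -> y = h.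
Proof.
case/cards1P=> x Hx ch cy.
have : h \in [set z | c z == None] by rewrite inE ch.
have : y \in [set z | c z == None] by rewrite inE cy.
by rewrite Hx !inE => /eqP-> /eqP->.
Qed.

Lemma good_valid c : good c -> valid_config c.
Proof. by case/andP. Qed.

Definition dist4 (a b c e : T) := [&& a != b, a != c, a != e & [&& b != c, b != e & c != e]].
Definition quad (a b c e : T) :=
  dist4 a b c e && [&& hop t a b, hop t b c, hop t c e & hop t e a].

Lemma quad_rotl a b c e : quad a b c e -> quad b c e a.
Proof.
rewrite /quad /dist4 => /andP[/and4P[n1 n2 n3 /and3P[n4 n5 n6]] /and4P[h1 h2 h3 h4]].
by rewrite n4 n5 h1 h2 h3 h4 n6 !(eq_sym _ a) n1 n2 n3.
Qed.

Lemma quad_rev a b c e : quad a b c e -> quad a e c b.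
Proof.
rewrite /quad /dist4 => /andP[/and4P[n1 n2 n3 /and3P[n4 n5 n6]] /and4P[h1 h2 h3 h4]].
rewrite n1 n2 n3 (eq_sym e) n6 (eq_sym e) n5 (eq_sym c) n4 /=.
by rewrite (hopC a) h4 (hopC e) h3 (hopC c) h2 (hopC b) h1.
Qed.

Definition rot3 (d : config T) a b c : config T :=
  [ffun y => if y == a then d b else if y == b then d c else if y == c then d a else d y].

Lemma quad_cyc (d : config T) v0 v1 v2 v3 : quad v0 v1 v2 v3 -> good d -> d v0 = None ->
  reach d (rot3 d v1 v2 v3).
Proof.
rewrite /quad /dist4 => /andP[/and4P[n01 n02 n03 /and3P[n12 n13 n23]] /and4P[h01 h12 h23 h30]] gd dv0.
have n10 : v1 != v0 by rewrite eq_sym.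
have n21 : v2 != v1 by rewrite eq_sym.
have n32 : v3 != v2 by rewrite eq_sym.
have r1 := step gd dv0 n10 h01.
have [g1 e1] := step_good gd dv0 n10.
have r2 := step g1 e1 n21 h12.
have [g2 e2] := step_good g1 e1 n21.
have r3 := step g2 e2 n32 h23.
have [g3 e3] := step_good g2 e2 n32.
have r4 := step g3 e3 n03 h30.
have -> : rot3 d v1 v2 v3 = mv (mv (mv (mv d v0 v1) v1 v2) v2 v3) v3 v0.
  by ffsolve.
exact: reach_trans (reach_trans (reach_trans r1 r2) r3) r4.
Qed.

Ltac ffsolve2 :=
  apply/ffunP => ?; rewrite !ffunE /sw;
  repeat (case: ifP => [/eqP ?|?]; subst);
  try (match goal with H : is_true (?x != ?x) |- _ => by rewrite eqxx in H end);
  try (match goal with H : (?x == ?x) = false |- _ => by rewrite eqxx in H end);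
  repeat (match goal with H : ?f ?v = Some _ |- context[?f ?v] => rewrite H end);
  done.

Lemma quad_swap (d : config T) v0 v1 v2 v3 p q : quad v0 v1 v2 v3 -> good d -> d v0 = None ->
  p \in [:: v1; v2; v3] -> q \in [:: v1; v2; v3] -> reach d (cp d (sw p q)).
Proof.
move=> Q gd dv0 Hp Hq.
have rA := quad_cyc Q gd dv0.
have rB := quad_cyc (quad_rev Q) gd dv0.
move: Q; rewrite /quad /dist4 => /andP[/and4P[n01 n02 n03 /and3P[n12 n13 n23]] _].
have vd := good_valid gd.
have nn : forall y, y != v0 -> exists b, d y = Some b.
  move=> y yn; case E: (d y) => [b|]; first by exists b.
  by rewrite (hole_uniq vd dv0 E) eqxx in yn.
have [b1 E1] : exists b, d v1 = Some b by apply: nn; rewrite eq_sym.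
have [b2 E2] : exists b, d v2 = Some b by apply: nn; rewrite eq_sym.
have [b3 E3] : exists b, d v3 = Some b by apply: nn; rewrite eq_sym.
suff : [\/ cp d (sw p q) = d, cp d (sw p q) = rot3 d v1 v2 v3 | cp d (sw p q) = rot3 d v3 v2 v1].
  case=> ->. exact: connect0. exact: rA. exact: rB.
move: Hp Hq; rewrite !inE => /or3P[]/eqP-> /or3P[]/eqP->;
  case: b1 E1; case: b2 E2; case: b3 E3 => E3 E2 E1;
  first [ apply: Or31; solve [ffsolve2] | apply: Or32; solve [ffsolve2] | apply: Or33; solve [ffsolve2] ].
Qed.

Lemma neq_sym (a b : T) : a != b -> b != a.
Proof. by rewrite eq_sym. Qed.
Lemma hop_sym (a b : T) : hop t a b -> hop t b a.
Proof. by rewrite hopC. Qed.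

Definition loops (x y : T) :=
  (exists w, tri w x y) \/ (exists u v, quad x y u v) \/ (exists u v, quad x u y v).

Definition BS (x y : T) := [/\ x != y, hop_connected_on t (~: [set x; y]) & loops x y].

Lemma loops_of (x y : T) : x != y -> common_short_loop t x y -> loops x y.
Proof.
move=> nxy; case/orP; move=> /existsP [s /and3P[Hl Hx Hy]].
- move: s Hl Hx Hy => [[|a [|b [|c []]]] //=] ?.
  rewrite /is_loop /= !inE => /and5P[/and3P[/norP[nab nac] nbc _] hab hbc hca _].
  move=> /or3P[]/eqP Ex /or3P[]/eqP Ey; subst; rewrite ?eqxx // in nxy; left;
  solve [exists a; by rewrite /tri ?nab ?(neq_sym nab) ?nac ?(neq_sym nac) ?nbc ?(neq_sym nbc) ?hab ?(hop_sym hab) ?hbc ?(hop_sym hbc) ?hca ?(hop_sym hca) | exists b; by rewrite /tri ?nab ?(neq_sym nab) ?nac ?(neq_sym nac) ?nbc ?(neq_sym nbc) ?hab ?(hop_sym hab) ?hbc ?(hop_sym hbc) ?hca ?(hop_sym hca) | exists c; by rewrite /tri ?nab ?(neq_sym nab) ?nac ?(neq_sym nac) ?nbc ?(neq_sym nbc) ?hab ?(hop_sym hab) ?hbc ?(hop_sym hbc) ?hca ?(hop_sym hca)].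
- move: s Hl Hx Hy => [[|a [|b [|c [|e []]]]] //=] ?.
  rewrite /is_loop /= !inE => /andP[/and4P[/norP[nab /norP[nac nae]] /norP[nbc nbe] nce _] /and5P[hab hbc hce hea _]].
  move=> /or4P[]/eqP Ex /or4P[]/eqP Ey; subst; rewrite ?eqxx // in nxy; right;
  solve [left; exists a, b; by rewrite /quad /dist4 ?nab ?(neq_sym nab) ?nac ?(neq_sym nac) ?nae ?(neq_sym nae) ?nbc ?(neq_sym nbc) ?nbe ?(neq_sym nbe) ?nce ?(neq_sym nce) ?hab ?(hop_sym hab) ?hbc ?(hop_sym hbc) ?hce ?(hop_sym hce) ?hea ?(hop_sym hea) | left; exists a, c; by rewrite /quad /dist4 ?nab ?(neq_sym nab) ?nac ?(neq_sym nac) ?nae ?(neq_sym nae) ?nbc ?(neq_sym nbc) ?nbe ?(neq_sym nbe) ?nce ?(neq_sym nce) ?hab ?(hop_sym hab) ?hbc ?(hop_sym hbc) ?hce ?(hop_sym hce) ?hea ?(hop_sym hea) | left; exists a, e; by rewrite /quad /dist4 ?nab ?(neq_sym nab) ?nac ?(neq_sym nac) ?nae ?(neq_sym nae) ?nbc ?(neq_sym nbc) ?nbe ?(neq_sym nbe) ?nce ?(neq_sym nce) ?hab ?(hop_sym hab) ?hbc ?(hop_sym hbc) ?hce ?(hop_sym hce) ?hea ?(hop_sym hea) | left; exists b, a; by rewrite /quad /dist4 ?nab ?(neq_sym nab) ?nac ?(neq_sym nac) ?nae ?(neq_sym nae) ?nbc ?(neq_sym nbc) ?nbe ?(neq_sym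 nbe) ?nce ?(neq_sym nce) ?hab ?(hop_sym hab) ?hbc ?(hop_sym hbc) ?hce ?(hop_sym hce) ?hea ?(hop_sym hea) | left; exists b, c; by rewrite /quad /dist4 ?nab ?(neq_sym nab) ?nac ?(neq_sym nac) ?nae ?(neq_sym nae) ?nbc ?(neq_sym nbc) ?nbe ?(neq_sym nbe) ?nce ?(neq_sym nce) ?hab ?(hop_sym hab) ?hbc ?(hop_sym hbc) ?hce ?(hop_sym hce) ?hea ?(hop_sym hea) | left; exists b, e; by rewrite /quad /dist4 ?nab ?(neq_sym nab) ?nac ?(neq_sym nac) ?nae ?(neq_sym nae) ?nbc ?(neq_sym nbc) ?nbe ?(neq_sym nbe) ?nce ?(neq_sym nce) ?hab ?(hop_sym hab) ?hbc ?(hop_sym hbc) ?hce ?(hop_sym hce) ?hea ?(hop_sym hea) | left; exists c, a; by rewrite /quad /dist4 ?nab ?(neq_sym nab) ?nac ?(neq_sym nac) ?nae ?(neq_sym nae) ?nbc ?(neq_sym nbc) ?nbe ?(neq_sym nbe) ?nce ?(neq_sym nce) ?hab ?(hop_sym hab) ?hbc ?(hop_sym hbc) ?hce ?(hop_sym hce) ?hea ?(hop_sym hea) | left; exists c, b; by rewrite /quad /dist4 ?nab ?(neq_sym nab) ?nac ?(neq_sym nac) ?nae ?(neq_sym nae) ?nbc ?(neq_sym nbc) ?nbe ?(neq_sym nbe) ?nce ?(neq_sym nce) ?hab ?(hop_sym hab) ?hbc ?(hop_sym hbc) ?hce ?(hop_sym hce) ?hea ?(hop_sym hea) | left; exists c,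 e; by rewrite /quad /dist4 ?nab ?(neq_sym nab) ?nac ?(neq_sym nac) ?nae ?(neq_sym nae) ?nbc ?(neq_sym nbc) ?nbe ?(neq_sym nbe) ?nce ?(neq_sym nce) ?hab ?(hop_sym hab) ?hbc ?(hop_sym hbc) ?hce ?(hop_sym hce) ?hea ?(hop_sym hea) | left; exists e, a; by rewrite /quad /dist4 ?nab ?(neq_sym nab) ?nac ?(neq_sym nac) ?nae ?(neq_sym nae) ?nbc ?(neq_sym nbc) ?nbe ?(neq_sym nbe) ?nce ?(neq_sym nce) ?hab ?(hop_sym hab) ?hbc ?(hop_sym hbc) ?hce ?(hop_sym hce) ?hea ?(hop_sym hea) | left; exists e, b; by rewrite /quad /dist4 ?nab ?(neq_sym nab) ?nac ?(neq_sym nac) ?nae ?(neq_sym nae) ?nbc ?(neq_sym nbc) ?nbe ?(neq_sym nbe) ?nce ?(neq_sym nce) ?hab ?(hop_sym hab) ?hbc ?(hop_sym hbc) ?hce ?(hop_sym hce) ?hea ?(hop_sym hea) | left; exists e, c; by rewrite /quad /dist4 ?nab ?(neq_sym nab) ?nac ?(neq_sym nac) ?nae ?(neq_sym nae) ?nbc ?(neq_sym nbc) ?nbe ?(neq_sym nbe) ?nce ?(neq_sym nce) ?hab ?(hop_sym hab) ?hbc ?(hop_sym hbc) ?hce ?(hop_sym hce) ?hea ?(hop_sym hea) | right; exists a, b; by rewrite /quad /dist4 ?nab ?(neq_sym nab) ?nac ?(neq_sym nac) ?nae ?(neq_sym nae) ?nbc ?(neq_sym nbc) ?nbe ?(neq_sym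 nbe) ?nce ?(neq_sym nce) ?hab ?(hop_sym hab) ?hbc ?(hop_sym hbc) ?hce ?(hop_sym hce) ?hea ?(hop_sym hea) | right; exists a, c; by rewrite /quad /dist4 ?nab ?(neq_sym nab) ?nac ?(neq_sym nac) ?nae ?(neq_sym nae) ?nbc ?(neq_sym nbc) ?nbe ?(neq_sym nbe) ?nce ?(neq_sym nce) ?hab ?(hop_sym hab) ?hbc ?(hop_sym hbc) ?hce ?(hop_sym hce) ?hea ?(hop_sym hea) | right; exists a, e; by rewrite /quad /dist4 ?nab ?(neq_sym nab) ?nac ?(neq_sym nac) ?nae ?(neq_sym nae) ?nbc ?(neq_sym nbc) ?nbe ?(neq_sym nbe) ?nce ?(neq_sym nce) ?hab ?(hop_sym hab) ?hbc ?(hop_sym hbc) ?hce ?(hop_sym hce) ?hea ?(hop_sym hea) | right; exists b, a; by rewrite /quad /dist4 ?nab ?(neq_sym nab) ?nac ?(neq_sym nac) ?nae ?(neq_sym nae) ?nbc ?(neq_sym nbc) ?nbe ?(neq_sym nbe) ?nce ?(neq_sym nce) ?hab ?(hop_sym hab) ?hbc ?(hop_sym hbc) ?hce ?(hop_sym hce) ?hea ?(hop_sym hea) | right; exists b, c; by rewrite /quad /dist4 ?nab ?(neq_sym nab) ?nac ?(neq_sym nac) ?nae ?(neq_sym nae) ?nbc ?(neq_sym nbc) ?nbe ?(neq_sym nbe) ?nce ?(neq_sym nce) ?hab ?(hop_sym hab) ?hbc ?(hop_sym hbc) ?hce ?(hop_sym hce) ?hea ?(hop_sym hea) | right; exists b,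 e; by rewrite /quad /dist4 ?nab ?(neq_sym nab) ?nac ?(neq_sym nac) ?nae ?(neq_sym nae) ?nbc ?(neq_sym nbc) ?nbe ?(neq_sym nbe) ?nce ?(neq_sym nce) ?hab ?(hop_sym hab) ?hbc ?(hop_sym hbc) ?hce ?(hop_sym hce) ?hea ?(hop_sym hea) | right; exists c, a; by rewrite /quad /dist4 ?nab ?(neq_sym nab) ?nac ?(neq_sym nac) ?nae ?(neq_sym nae) ?nbc ?(neq_sym nbc) ?nbe ?(neq_sym nbe) ?nce ?(neq_sym nce) ?hab ?(hop_sym hab) ?hbc ?(hop_sym hbc) ?hce ?(hop_sym hce) ?hea ?(hop_sym hea) | right; exists c, b; by rewrite /quad /dist4 ?nab ?(neq_sym nab) ?nac ?(neq_sym nac) ?nae ?(neq_sym nae) ?nbc ?(neq_sym nbc) ?nbe ?(neq_sym nbe) ?nce ?(neq_sym nce) ?hab ?(hop_sym hab) ?hbc ?(hop_sym hbc) ?hce ?(hop_sym hce) ?hea ?(hop_sym hea) | right; exists c, e; by rewrite /quad /dist4 ?nab ?(neq_sym nab) ?nac ?(neq_sym nac) ?nae ?(neq_sym nae) ?nbc ?(neq_sym nbc) ?nbe ?(neq_sym nbe) ?nce ?(neq_sym nce) ?hab ?(hop_sym hab) ?hbc ?(hop_sym hbc) ?hce ?(hop_sym hce) ?hea ?(hop_sym hea) | right; exists e, a; by rewrite /quad /dist4 ?nab ?(neq_sym nab) ?nac ?(neq_sym nac) ?nae ?(neq_sym nae) ?nbc ?(neq_sym nbc) ?nbe ?(neq_sym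 nbe) ?nce ?(neq_sym nce) ?hab ?(hop_sym hab) ?hbc ?(hop_sym hbc) ?hce ?(hop_sym hce) ?hea ?(hop_sym hea) | right; exists e, b; by rewrite /quad /dist4 ?nab ?(neq_sym nab) ?nac ?(neq_sym nac) ?nae ?(neq_sym nae) ?nbc ?(neq_sym nbc) ?nbe ?(neq_sym nbe) ?nce ?(neq_sym nce) ?hab ?(hop_sym hab) ?hbc ?(hop_sym hbc) ?hce ?(hop_sym hce) ?hea ?(hop_sym hea) | right; exists e, c; by rewrite /quad /dist4 ?nab ?(neq_sym nab) ?nac ?(neq_sym nac) ?nae ?(neq_sym nae) ?nbc ?(neq_sym nbc) ?nbe ?(neq_sym nbe) ?nce ?(neq_sym nce) ?hab ?(hop_sym hab) ?hbc ?(hop_sym hbc) ?hce ?(hop_sym hce) ?hea ?(hop_sym hea)].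
Qed.

Lemma loops_sym x y : loops x y -> loops y x.
Proof.
case=> [[w]|[[u [v Q]]|[u [v Q]]]].
- rewrite /tri => /and5P[n1 n2 n3 h1 /andP[h2 h3]]; left; exists w.
  by rewrite /tri n2 n1 neq_sym // hop_sym // hop_sym // hop_sym.
- by right; left; exists v, u; do 3 apply: quad_rotl; apply: quad_rev.
- by right; right; exists v, u; do 2 apply: quad_rotl.
Qed.

Lemma BS_sym x y : BS x y -> BS y x.
Proof. by case=> n H L; split; [rewrite eq_sym | rewrite setUC | apply: loops_sym]. Qed.

Lemma BS_of_bond x y : exchange_bond t x y -> BS x y.
Proof. by case=> n L H; split=> //; apply: loops_of. Qed.

Ltac simp_eqs := rewrite ?eqxx /=; repeat (match goal with
 | H : is_true (?a != ?b) |- context[?a == ?b] => rewrite (negbTE H)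
 | H : is_true (?a != ?b) |- context[?b == ?a] => rewrite (negbTE (neq_sym H))
 end; rewrite ?eqxx /=).

Ltac ffX := let z := fresh "z" in
  apply/ffunP => z; rewrite !ffunE /sw;
  repeat (simp_eqs; match goal with |- context[z == ?v] => let E := fresh "E" in case: (eqVneq z v) => [E|?]; [rewrite ?E|] end);
  simp_eqs;
  repeat (match goal with H : ?f ?v = None |- context[?f ?v] => rewrite H end);
  done.

Ltac ffsolve3 :=
  apply/ffunP => ?; rewrite !ffunE /sw;
  repeat (case: ifP => [/eqP ?|?]; subst);
  try (match goal with H : is_true (?x != ?x) |- _ => by rewrite eqxx in H end);
  try (match goal with H : (?x == ?x) = false |- _ => by rewrite eqxx in H end);
  repeat (match goal with H : ?f ?v = None |- context[?f ?v] => rewrite H end);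
  done.

Lemma hole_first x y (c : config T) : BS x y -> good c -> c x = None -> reach c (cp c (sw x y)).
Proof.
case=> nxy _ [[w Tr]|[[u [v Q]]|[u [v Q]]]] gc cx.
- move: Tr => /and5P[_ _ _ _ /andP[h _]].
  by rewrite -mv_cp //; apply: step; rewrite // eq_sym.
- move: Q => /andP[_ /and4P[h _ _ _]].
  by rewrite -mv_cp //; apply: step; rewrite // eq_sym.
- have Q' := quad_rotl (quad_rotl Q).
  move: Q => /andP[/and4P[nxu nxy' nxv /and3P[nuy nuv nyv]] /and4P[hxu huy _ _]].
  have nux : u != x by rewrite eq_sym.
  have nyu : y != u by rewrite eq_sym.
  have r1 := step gc cx nux hxu.
  have [g1 e1] := step_good gc cx nux.
  have r2 := step g1 e1 nyu huy.
  have [g2 e2] := step_good g1 e1 nyu.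
  have i1 : x \in [:: v; x; u] by rewrite !inE eqxx orbT.
  have i2 : u \in [:: v; x; u] by rewrite !inE eqxx !orbT.
  have r3 := quad_swap Q' g2 e2 i1 i2.
  have E : cp (mv (mv c x u) u y) (sw x u) = cp c (sw x y) by ffX.
  by rewrite -E; apply: reach_trans (reach_trans r1 r2) r3.
Qed.

Definition Pv x y v := forall d : config T, good d -> d v = None -> reach d (cp d (sw x y)).

Lemma prop_step x y a b : x != y -> a \in ~: [set x; y] -> b \in ~: [set x; y] -> hop t a b ->
  Pv x y b -> Pv x y a.
Proof.
move=> nxy; rewrite !inE => /norP[ax ay] /norP[bx by'] hab Pb d gd da.
case: (eqVneq b a) => [eba|nba]; first by apply: Pb; rewrite // eba.
have r1 := step gd da nba hab.
have [g1 e1] := step_good gd da nba.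
have r2 := Pb _ g1 e1.
have gc : good (cp d (sw x y)) by rewrite good_cp.
have ca : cp d (sw x y) a = None by rewrite ffunE /sw (negbTE ax) (negbTE ay).
have r3 := step gc ca nba hab.
have E : cp (mv d a b) (sw x y) = mv (cp d (sw x y)) a b by ffX.
rewrite E in r2.
apply: reach_trans (reach_trans r1 r2) _.
by rewrite reach_sym.
Qed.

Lemma prop_all x y h w : BS x y -> h \in ~: [set x; y] -> w \in ~: [set x; y] ->
  Pv x y w -> Pv x y h.
Proof.
case=> nxy Hc _ Hh Hw Pw.
move/connectP: (Hc h w Hh Hw) => [p Hp Hl].
elim: p h Hh Hp Hl => [|z p IH] h Hh /=; first by move=> _ <-.
case/andP=> /and3P[_ Hz hz] Hp Hl.
apply: (prop_step nxy Hh Hz hz).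
exact: IH.
Qed.

Lemma base x y : BS x y -> exists2 w, w \in ~: [set x; y] & Pv x y w.
Proof.
case=> nxy _ [[w Tr]|[[u [v Q]]|[u [v Q]]]].
- exists w; last by move=> d gd dw; apply: tri_swap Tr gd dw.
  by move: Tr => /and3P[n1 n2 _]; rewrite !inE negb_or n1 n2.
- exists u.
    by move: Q => /andP[/and4P[_ n1 _ /and3P[n2 _ _]] _]; rewrite !inE negb_or !(eq_sym u) n1 n2.
  move=> d gd du; apply: (quad_swap (quad_rotl (quad_rotl Q))) => //.
    by rewrite !inE eqxx ?orbT.
  by rewrite !inE eqxx ?orbT.
- exists u.
    by move: Q => /andP[/and4P[n1 _ _ /and3P[n2 _ _]] _]; rewrite !inE negb_or (eq_sym u) n1 n2.
  move=> d gd du; apply: (quad_swap (quad_rotl Q)) => //.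
    by rewrite !inE eqxx ?orbT.
  by rewrite !inE eqxx ?orbT.
Qed.

Lemma sw_C (c : config T) x y : cp c (sw x y) = cp c (sw y x).
Proof. by ffsolve. Qed.

Lemma bond_swap x y (c : config T) : BS x y -> good c -> reach c (cp c (sw x y)).
Proof.
move=> B gc.
move/cards1P: (good_valid gc) => [h Hh].
have : h \in [set z | c z == None] by rewrite Hh inE.
rewrite inE => /eqP ch.
case: (eqVneq h x) => [hx|nhx]; first by subst; apply: hole_first.
case: (eqVneq h y) => [hy|nhy]; first by subst; rewrite sw_C; apply: hole_first => //; apply: BS_sym.
have [w Hw Pw] := base B.
apply: (prop_all (h := h) B _ Hw Pw) => //.
by rewrite !inE negb_or; apply/andP.
Qed.

Definition Cs x y := forall c : config T, good c -> reach c (cp c (sw x y)).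

Lemma sw_id (c : config T) x : cp c (sw x x) = c.
Proof. by ffX. Qed.

Lemma Cs_refl x : Cs x x.
Proof. by move=> c _; rewrite sw_id; apply: connect0. Qed.

Lemma Cs_trans x y z : Cs x y -> Cs y z -> Cs x z.
Proof.
move=> Cxy Cyz.
case: (eqVneq x z) => [->|nxz]; first exact: Cs_refl.
case: (eqVneq y x) => [eyx|nyx]; first by rewrite -eyx.
case: (eqVneq y z) => [eyz|nyz]; first by rewrite -eyz.
move=> c gc.
have g1 : good (cp c (sw x y)) by rewrite good_cp.
have g2 : good (cp (cp c (sw x y)) (sw y z)) by rewrite !good_cp.
have r1 := Cxy _ gc. have r2 := Cyz _ g1. have r3 := Cxy _ g2.
have -> : cp c (sw x z) = cp (cp (cp c (sw x y)) (sw y z)) (sw x y) by ffX.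
exact: reach_trans (reach_trans r1 r2) r3.
Qed.

Lemma Cs_rt x y : clos_refl_trans T (exchange_bond t) x y -> Cs x y.
Proof.
elim=> [a b Hab|a|a b c _ IH1 _ IH2].
- move=> c gc; apply: bond_swap => //; exact: BS_of_bond.
- exact: Cs_refl.
- exact: Cs_trans IH1 IH2.
Qed.

Definition N (a : option bool) (c : config T) := #|[set y | c y == a]|.

Lemma N_sum a (c : config T) : N a c = (\sum_y (c y == a))%N.
Proof.
rewrite /N -sum1_card big_mkcond /=; apply: eq_bigr => y _.
by rewrite inE; case: (c y == a).
Qed.

Lemma count_total (c : config T) : (N None c + N (Some true) c + N (Some false) c)%N = #|T|.
Proof.
rewrite !N_sum -!big_split /= -sum1_card; apply: eq_bigr => y _.
by case: (c y) => [[]|].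
Qed.

Lemma count_spin (c : config T) :
  total_spin c = (1/2) * (N (Some true) c)%:R - (1/2) * (N (Some false) c)%:R.
Proof.
rewrite spin_sum !N_sum !natr_sum !mulr_sumr -sumrB; apply: eq_bigr => y _.
by case: (c y) => [[]|] /=; rewrite ?mulr1 ?mulr0 ?subr0 ?sub0r.
Qed.

Lemma counts (c c' : config T) : good c -> good c' -> forall a, N a c = N a c'.
Proof.
move=> /andP[v1 /eqP s1] /andP[v2 /eqP s2].
have n1 : N None c = 1%N by apply/eqP.
have n2 : N None c' = 1%N by apply/eqP.
have ht := count_total c. have ht' := count_total c'.
rewrite n1 in ht; rewrite n2 in ht'.
have h2 : ((N (Some true) c)%:R : rat) + (N (Some false) c)%:R =
          (N (Some true) c')%:R + (N (Some false) c')%:R.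
  rewrite -!natrD; congr (_%:R); apply/eqP; rewrite -(eqn_add2l 1) !addnA ht ht' //.
have h1 := count_spin c. have h1' := count_spin c'.
have e1 : ((N (Some true) c)%:R : rat) = (N (Some true) c')%:R by lra.
move/eqP: e1; rewrite eqr_nat => /eqP e1.
have e2 : N (Some false) c = N (Some false) c'.
  by apply/eqP; rewrite -(eqn_add2l (N (Some true) c)) {2}e1 -(eqn_add2l 1) !addnA ht ht'.
by case=> [[]|]; rewrite ?n1 ?n2.
Qed.

Lemma sort_reach (L : lattice_connected_by_exchange_bonds t) n :
  forall c c' : config T, good c -> good c' -> (#|[set y | c y != c' y]| <= n)%N -> reach c c'.
Proof.
elim: n => [|n IH] c c' gc gc' Hn.
  have -> : c = c'; last exact: connect0.
  apply/ffunP => y; apply/eqP; apply: contraT => Hy.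
  have : (0 < #|[set y | c y != c' y]|)%N by apply/card_gt0P; exists y; rewrite inE.
  by rewrite leqn0 in Hn; rewrite (eqP Hn).
case: (pickP (fun y => c y != c' y)) => [x Hx|H0]; last first.
  have -> : c = c'; last exact: connect0.
  by apply/ffunP => y; apply/eqP; move: (H0 y) => /negbT; rewrite negbK.
set a := c' x.
have cF := counts gc gc' a.
have : ~~ ([set y | c y == a] \subset [set y | c' y == a]).
  apply/negP => sub.
  have := (subset_cardP cF sub x); rewrite !inE eqxx.
  by move=> E; move: Hx; rewrite -/a E.
case/subsetPn => y; rewrite !inE => /eqP cy c'y.
have nyx : y != x by apply: contraNneq c'y => ->.
have g1 : good (cp c (sw x y)) by rewrite good_cp.
have r1 : reach c (cp c (sw x y)) by apply: Cs_rt.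
apply: reach_trans r1 (IH _ _ g1 gc' _).
have Hsub : [set z | cp c (sw x y) z != c' z] \subset [set z | c z != c' z] :\ x.
  apply/subsetP => z; rewrite !inE ffunE /sw.
  case: (eqVneq z x) => [->|nzx] /=; first by rewrite cy eqxx.
  case: (eqVneq z y) => [->|nzy] //= _.
  by rewrite cy eq_sym.
apply: leq_trans (subset_leq_card Hsub) _.
move: Hn; rewrite (cardsD1 x) inE Hx /=.
by rewrite ltnS.
Qed.

End Proof6.

Theorem mainTheorem6 (R : realType) (T : finType) (t : T -> T -> R)
  (t_sym : forall x y, t x y = t y x) :
  lattice_connected_by_exchange_bonds t -> connectivity_condition t.
Proof.
move=> L Sv c c' v v' s s'.
have gc : good Sv c by rewrite /good v s eqxx.
have gc' : good Sv c' by rewrite /good v' s' eqxx.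
exact: (@sort_reach R T t t_sym Sv L _ c c' gc gc' (leqnn _)).
Qed.
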